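(* Let $(f,L)$ satisfy the usual conditions and suppose $S=S^{f,L}>0$. Let $L_0=\frac{\pi}{2\sqrt S}\vee1$, define $\tilde L(t)=L(t)$ if $L(t)\le L_0$ and $\tilde L(t)=L_0+(L(t)-L_0)e^{-(L(t)-L_0)^2}$ if $L(t)>L_0$, and $\tilde f(t)=f(t)+L(t)-\tilde L(t)$. Then the pair $(\tilde f,\tilde L)$ satisfies conditions (II), (III) and (IV), and $S^{\tilde f,\tilde L}\ge S^{f,L}/2>0$.
   Context: For twice continuously differentiable $g:[0,\infty)\to\mathbb R$ and $M:[0,\infty)\to(0,\infty)$ and a constant $r>0$, set $E^{g,M}(t)=|g'(t)|M(t)+\int_0^t|g''(s)|M(s)ds+\frac12|M'(t)|M(t)+\frac12\int_0^t|M''(s)|M(s)ds$ and $S^{g,M}=\liminf_{t\to\infty}\frac1t\int_0^t\big(r-\frac12 g'(s)^2-\frac{\pi^2}{8M(s)^2}+\frac{M'(s)}{2M(s)}\big)ds$. The pair $(g,M)$ satisfies the usual conditions if (I) $g(0)=0$; (II) $g$ and $M$ are twice continuously differentiable; (III) $E^{g,M}(t)/t\to0$ as $t\to\infty$; (IV) $S^{g,M}\in(-\infty,\infty)$. *)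

(* Defs.v *)
From Stdlib Require Import Reals.
From Coquelicot Require Import Coquelicot.
Open Scope R_scope.

Definition deriv_on (g g' : R -> R) : Prop :=
  forall t, 0 <= t ->
    filterlim (fun h => (g (t + h) - g t) / h)
      (within (fun h => h <> 0 /\ 0 <= t + h) (locally 0))
      (locally (g' t)).

Definition cont_on (g : R -> R) : Prop :=
  forall t, 0 <= t ->
    filterlim g (within (fun s => 0 <= s) (locally t)) (locally (g t)).

Definition C2_on (g g1 g2 : R -> R) : Prop :=
  deriv_on g g1 /\ deriv_on g1 g2 /\ cont_on g2.

(* E^{g,M}(t), written with g' = g1, g'' = g2, M' = M1, M'' = M2. *)
Definition E_fun (g1 g2 M M1 M2 : R -> R) (t : R) : R :=
  Rabs (g1 t) * M t + RInt (fun s => Rabs (g2 s) * M s) 0 t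
  + / 2 * Rabs (M1 t) * M t + / 2 * RInt (fun s => Rabs (M2 s) * M s) 0 t.

Definition E_vanishes (g1 g2 M M1 M2 : R -> R) : Prop :=
  filterlim (fun t => E_fun g1 g2 M M1 M2 t / t)
    (Rbar_locally p_infty) (locally 0).

Definition liminf_infty (h : R -> R) : Rbar :=
  Rbar_lub (fun y => exists T : R,
    y = Rbar_glb (fun z => exists t, T <= t /\ z = Finite (h t))).

(* S^{g,M}, written with g' = g1, M' = M1. *)
Definition S_val (r : R) (g1 M M1 : R -> R) : Rbar :=
  liminf_infty (fun t => / t * RInt (fun s =>
     r - / 2 * (g1 s) ^ 2 - PI ^ 2 / (8 * (M s) ^ 2) + M1 s / (2 * M s)) 0 t).

(* Main.v *)
Require Import Defs.
From Stdlib Require Import Reals Lra Psatz Classical.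
From Coquelicot Require Import Coquelicot.
Open Scope R_scope.

Definition Ft (t : R) := within (fun h => h <> 0 /\ 0 <= t + h) (locally 0).
Definition Wt (t : R) := within (fun s => 0 <= s) (locally t).

Lemma ball_R (x e y : R) : ball x e y <-> Rabs (y - x) < e.
Proof. reflexivity. Qed.

Lemma Ft_eps t (P : R -> Prop) :
  Ft t P <-> exists d, 0 < d /\ forall h, Rabs h < d -> h <> 0 -> 0 <= t + h -> P h.
Proof.
  unfold Ft, within, locally; split.
  - intros [e He]. exists e; split; [apply cond_pos|].
    intros h Hh H1 H2. apply He; [change (Rabs (h - 0) < e); rewrite Rminus_0_r; exact Hh|tauto].
  - intros [d [Hd H]]. exists (mkposreal d Hd). intros y Hy [H1 H2].
    apply H; auto. change (Rabs (y - 0) < d) in Hy. rewrite Rminus_0_r in Hy. exact Hy.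
Qed.

Lemma Wt_eps t (P : R -> Prop) :
  Wt t P <-> exists d, 0 < d /\ forall s, Rabs (s - t) < d -> 0 <= s -> P s.
Proof.
  unfold Wt, within, locally; split.
  - intros [e He]. exists e; split; [apply cond_pos|].
    intros h Hh H1. apply He; [apply ball_R; exact Hh|tauto].
  - intros [d [Hd H]]. exists (mkposreal d Hd). intros y Hy H1.
    apply H; auto.
Qed.

Lemma lim_eps {T} (F : (T -> Prop) -> Prop) {FF : Filter F} (u : T -> R) a :
  filterlim u F (locally a) <-> forall e, 0 < e -> F (fun x => Rabs (u x - a) < e).
Proof.
  rewrite filterlim_locally. split.
  - intros H e He. exact (H (mkposreal e He)).
  - intros H e. apply H, cond_pos.
Qed.

Section Lims.
Context {T : Type} (F : (T -> Prop) -> Prop) {FF : Filter F}.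
Lemma lim_plus (u v : T -> R) a b : filterlim u F (locally a) -> filterlim v F (locally b) ->
  filterlim (fun x => u x + v x) F (locally (a + b)).
Proof. intros Hu Hv. eapply filterlim_comp_2; [exact Hu|exact Hv|apply (filterlim_plus a b)]. Qed.
Lemma lim_mult (u v : T -> R) a b : filterlim u F (locally a) -> filterlim v F (locally b) ->
  filterlim (fun x => u x * v x) F (locally (a * b)).
Proof. intros Hu Hv. eapply filterlim_comp_2; [exact Hu|exact Hv|apply (filterlim_mult a b)]. Qed.
Lemma lim_opp (u : T -> R) a : filterlim u F (locally a) ->
  filterlim (fun x => - u x) F (locally (- a)).
Proof. intros Hu. eapply filterlim_comp; [exact Hu|apply (filterlim_opp a)]. Qed.
Lemma lim_minus (u v : T -> R) a b : filterlim u F (locally a) -> filterlim v F (locally b) ->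
  filterlim (fun x => u x - v x) F (locally (a - b)).
Proof. intros Hu Hv. apply lim_plus; auto. apply lim_opp; auto. Qed.
Lemma lim_const (c : R) : filterlim (fun _ => c) F (locally c).
Proof. apply filterlim_const. Qed.
Lemma lim_comp (u : T -> R) (psi : R -> R) a : filterlim u F (locally a) -> continuous psi a ->
  filterlim (fun x => psi (u x)) F (locally (psi a)).
Proof. intros Hu Hp. eapply filterlim_comp; [exact Hu|exact Hp]. Qed.
End Lims.

Lemma lim_ext {T} (F : (T -> Prop) -> Prop) {FF : Filter F} (u v : T -> R) a :
  (forall x, u x = v x) -> filterlim u F (locally a) -> filterlim v F (locally a).
Proof. intros H. apply filterlim_ext. exact H. Qed.

Lemma Ft_filter t : Filter (Ft t).
Proof. unfold Ft. apply within_filter, locally_filter. Qed.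
#[local] Existing Instance Ft_filter.
Lemma Wt_filter t : Filter (Wt t).
Proof. unfold Wt. apply within_filter, locally_filter. Qed.
#[local] Existing Instance Wt_filter.

Lemma deriv_on_eq g g' : deriv_on g g' <->
  forall t, 0 <= t -> filterlim (fun h => (g (t + h) - g t) / h) (Ft t) (locally (g' t)).
Proof. reflexivity. Qed.

Lemma cont_on_eq g : cont_on g <-> forall t, 0 <= t -> filterlim g (Wt t) (locally (g t)).
Proof. reflexivity. Qed.

Lemma lim_Ft_id t : filterlim (fun h => h) (Ft t) (locally 0).
Proof.
  apply lim_eps; [apply Ft_filter|]. intros e He. apply Ft_eps. exists e; split; auto.
  intros h Hh _ _. rewrite Rminus_0_r; exact Hh.
Qed.

Lemma deriv_cont_F g g' t : deriv_on g g' -> 0 <= t ->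
  filterlim (fun h => g (t + h)) (Ft t) (locally (g t)).
Proof.
  intros Hd Ht.
  assert (H := lim_plus (Ft t) _ _ _ _ (lim_const (Ft t) (g t))
           (lim_mult (Ft t) _ _ _ _ (lim_Ft_id t) (Hd t Ht))).
  simpl in H. replace (g t + 0 * g' t) with (g t) in H by ring.
  unfold Ft in *. eapply filterlim_within_ext; [| exact H].
  intros h [Hh _]. field. exact Hh.
Qed.

Lemma deriv_cont g g' : deriv_on g g' -> cont_on g.
Proof.
  intros Hd t Ht. apply lim_eps; [apply Wt_filter|]. intros e He.
  pose proof (proj1 (lim_eps _ _ _) (Hd t Ht) 1 Rlt_0_1) as HH.
  apply Ft_eps in HH. destruct HH as [d [Hd0 Hd1]].
  set (M := Rabs (g' t) + 1).
  assert (HM : 0 < M) by (unfold M; pose proof (Rabs_pos (g' t)); lra).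
  apply Wt_eps. exists (Rmin d (e / M)). split.
  { apply Rmin_pos; auto. apply Rdiv_lt_0_compat; auto. }
  intros s Hs Hs0.
  destruct (Req_dec s t) as [->|Hne].
  { rewrite Rminus_diag, Rabs_R0; auto. }
  assert (Hh := Hd1 (s - t)). replace (t + (s - t)) with s in Hh by ring.
  assert (Hlt : Rabs (s - t) < d) by (eapply Rlt_le_trans; [exact Hs| apply Rmin_l]).
  specialize (Hh Hlt ltac:(lra) Hs0).
  assert (Hq : Rabs ((g s - g t) / (s - t)) <= M).
  { unfold M. pose proof (Rabs_triang_inv ((g s - g t) / (s - t)) (g' t)). lra. }
  assert (Heq : g s - g t = ((g s - g t) / (s - t)) * (s - t)) by (field; lra).
  rewrite Heq, Rabs_mult.
  assert (Hlt2 : Rabs (s - t) < e / M) by (eapply Rlt_le_trans; [exact Hs| apply Rmin_r]).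
  apply Rle_lt_trans with (M * Rabs (s - t)).
  { apply Rmult_le_compat_r; auto. apply Rabs_pos. }
  apply Rmult_lt_compat_l with (r := M) in Hlt2; auto.
  replace (M * (e / M)) with e in Hlt2 by (field; lra). exact Hlt2.
Qed.

Lemma deriv_ext g g' h h' : (forall t, g t = h t) -> (forall t, g' t = h' t) ->
  deriv_on g g' -> deriv_on h h'.
Proof.
  intros E E' Hd t Ht. rewrite <- E'. eapply lim_ext; [apply Ft_filter| |apply (Hd t Ht)].
  intros x; simpl. rewrite !E. reflexivity.
Qed.

Lemma deriv_plus u u' v v' : deriv_on u u' -> deriv_on v v' ->
  deriv_on (fun s => u s + v s) (fun s => u' s + v' s).
Proof.
  intros Hu Hv t Ht. eapply lim_ext; [apply Ft_filter| |apply (lim_plus _ _ _ _ _ (Hu t Ht) (Hv t Ht))].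
  intros h; simpl. unfold Rdiv; ring.
Qed.

Lemma deriv_minus u u' v v' : deriv_on u u' -> deriv_on v v' ->
  deriv_on (fun s => u s - v s) (fun s => u' s - v' s).
Proof.
  intros Hu Hv t Ht. eapply lim_ext; [apply Ft_filter| |apply (lim_minus _ _ _ _ _ (Hu t Ht) (Hv t Ht))].
  intros h; simpl. unfold Rdiv; ring.
Qed.

Lemma deriv_mult u u' v v' : deriv_on u u' -> deriv_on v v' ->
  deriv_on (fun s => u s * v s) (fun s => u' s * v s + u s * v' s).
Proof.
  intros Hu Hv t Ht.
  assert (H := lim_plus _ _ _ _ _
     (lim_mult _ _ _ _ _ (Hu t Ht) (lim_const (Ft t) (v t)))
     (lim_mult _ _ _ _ _ (deriv_cont_F u u' t Hu Ht) (Hv t Ht))).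
  eapply lim_ext; [apply Ft_filter| |apply H].
  intros h; simpl. unfold Rdiv; ring.
Qed.

Lemma deriv_const c : deriv_on (fun _ => c) (fun _ => 0).
Proof.
  intros t Ht. eapply lim_ext; [apply Ft_filter| |apply (lim_const (Ft t))].
  intros h; simpl. unfold Rdiv; ring.
Qed.

Lemma deriv_id : deriv_on (fun s => s) (fun _ => 1).
Proof.
  intros t Ht. unfold Ft. eapply filterlim_within_ext; [|apply filterlim_const].
  intros h [Hh _]. field. exact Hh.
Qed.

Lemma deriv_comp (psi psi' : R -> R) g g' :
  (forall t, 0 <= t -> is_derive psi (g t) (psi' (g t))) -> deriv_on g g' ->
  deriv_on (fun s => psi (g s)) (fun s => psi' (g s) * g' s).
Proof.
  intros Hpsi Hd t Ht.
  set (y0 := g t).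
  set (Q := fun y => match Req_EM_T y y0 with left _ => psi' y0 | right _ => (psi y - psi y0) / (y - y0) end).
  assert (HQ : continuous Q y0).
  { apply lim_eps; [apply locally_filter|]. intros e He.
    pose proof (proj1 (is_derive_Reals _ _ _) (Hpsi t Ht)) as Hl.
    destruct (Hl e He) as [d Hd1].
    exists d. intros y Hy. unfold Q. destruct (Req_EM_T y0 y0) as [_|C]; [|congruence].
    destruct (Req_EM_T y y0) as [E|Ne].
    - rewrite Rminus_diag, Rabs_R0; auto.
    - change (Rabs (y - y0) < d) in Hy.
      specialize (Hd1 (y - y0) ltac:(lra) Hy). fold y0 in Hd1.
      rewrite Rplus_minus in Hd1. exact Hd1. }
  assert (H := lim_mult _ _ _ _ _ (lim_comp _ _ Q _ (deriv_cont_F g g' t Hd Ht) HQ) (Hd t Ht)).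
  unfold Q at 2 in H. destruct (Req_EM_T (g t) y0) as [_|C]; [|unfold y0 in C; congruence].
  unfold Ft in *. eapply filterlim_within_ext; [|apply H].
  intros h [Hh _]; simpl. unfold Q. destruct (Req_EM_T (g (t + h)) y0) as [E|Ne].
  - rewrite E. unfold y0. unfold Rdiv. ring.
  - unfold y0 in *. field. split; auto. lra.
Qed.

#[local] Existing Instance Ft_filter.
#[local] Existing Instance Wt_filter.

Lemma cont_plus u v : cont_on u -> cont_on v -> cont_on (fun s => u s + v s).
Proof. intros Hu Hv t Ht. apply (lim_plus (Wt t)); [apply Hu|apply Hv]; auto. Qed.
Lemma cont_minus u v : cont_on u -> cont_on v -> cont_on (fun s => u s - v s).
Proof. intros Hu Hv t Ht. apply (lim_minus (Wt t)); [apply Hu|apply Hv]; auto. Qed.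
Lemma cont_mult u v : cont_on u -> cont_on v -> cont_on (fun s => u s * v s).
Proof. intros Hu Hv t Ht. apply (lim_mult (Wt t)); [apply Hu|apply Hv]; auto. Qed.
Lemma cont_const c : cont_on (fun _ => c).
Proof. intros t Ht. apply (lim_const (Wt t)). Qed.
Lemma cont_comp (psi : R -> R) g : (forall t, 0 <= t -> continuous psi (g t)) -> cont_on g ->
  cont_on (fun s => psi (g s)).
Proof. intros Hp Hg t Ht. apply (lim_comp (Wt t)); [apply Hg|apply Hp]; auto. Qed.
Lemma cont_abs g : cont_on g -> cont_on (fun s => Rabs (g s)).
Proof. intros; apply cont_comp; auto. intros; apply continuous_Rabs. Qed.
Lemma cont_pow2 g : cont_on g -> cont_on (fun s => (g s) ^ 2).
Proof. intros H. apply (cont_comp (fun x => x ^ 2)); [|exact H]. intros t _.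
  apply (ex_derive_continuous (fun x => x ^ 2)). auto_derive. auto. Qed.
Lemma cont_inv g : (forall t, 0 <= t -> g t <> 0) -> cont_on g -> cont_on (fun s => / g s).
Proof. intros Hn H. apply (cont_comp Rinv); [|exact H]. intros t Ht. apply continuous_Rinv; auto. Qed.
Lemma cont_div u v : (forall t, 0 <= t -> v t <> 0) -> cont_on u -> cont_on v -> cont_on (fun s => u s / v s).
Proof. intros Hn Hu Hv. unfold Rdiv. apply cont_mult; auto. apply cont_inv; auto. Qed.

Lemma cont_ext0 h z : cont_on h -> 0 <= z -> continuous (fun y => h (Rmax 0 y)) z.
Proof.
  intros Hh Hz. apply lim_eps; [apply locally_filter|]. intros e He.
  pose proof (proj1 (lim_eps _ _ _) (Hh z Hz) e He) as HH. apply Wt_eps in HH.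
  destruct HH as [d [Hd H]]. exists (mkposreal d Hd). intros y Hy.
  change (Rabs (y - z) < d) in Hy.
  rewrite (Rmax_right 0 z Hz). apply H.
  - unfold Rmax; destruct (Rle_dec 0 y).
    + exact Hy.
    + revert Hy. unfold Rabs; destruct (Rcase_abs _); destruct (Rcase_abs _); lra.
  - apply Rmax_l.
Qed.

Lemma ex_int h a b : cont_on h -> 0 <= a -> a <= b -> ex_RInt h a b.
Proof.
  intros Hh Ha Hab.
  apply (ex_RInt_ext (fun y => h (Rmax 0 y))).
  - intros x Hx. rewrite Rmin_left, Rmax_right in Hx by lra. rewrite Rmax_right; auto; lra.
  - apply (@ex_RInt_continuous R_CompleteNormedModule). intros z Hz. rewrite Rmin_left, Rmax_right in Hz by lra.
    apply cont_ext0; auto; lra.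
Qed.

Lemma FTC g g' a b : deriv_on g g' -> cont_on g' -> 0 <= a -> a <= b ->
  RInt g' a b = g b - g a.
Proof.
  intros Hd Hc Ha Hab.
  set (ge := fun x => if Rle_dec 0 x then g x else g 0 + g' 0 * x).
  set (ge' := fun y => g' (Rmax 0 y)).
  assert (HD : forall x, 0 <= x -> is_derive ge x (ge' x)).
  { intros x Hx. apply is_derive_Reals. intros eps Heps.
    pose proof (proj1 (lim_eps _ _ _) (Hd x Hx) eps Heps) as HH. apply Ft_eps in HH.
    destruct HH as [d [Hd0 H]].
    unfold ge'. rewrite Rmax_right by lra.
    destruct (Req_dec x 0) as [Ex|Nx].
    - subst x. exists (mkposreal d Hd0). intros h Hh0 Hh. simpl in Hh.
      unfold ge. destruct (Rle_dec 0 (0 + h)) as [P|P]; destruct (Rle_dec 0 0) as [_|C]; try lra.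
      + apply H; auto.
      + replace ((g 0 + g' 0 * (0 + h) - g 0) / h - g' 0) with 0 by (field; auto).
        rewrite Rabs_R0; auto.
    - assert (Hxp : 0 < x) by lra.
      exists (mkposreal (Rmin d x) (Rmin_pos _ _ Hd0 Hxp)). intros h Hh0 Hh. simpl in Hh.
      assert (Hh1 : Rabs h < d) by (eapply Rlt_le_trans; [exact Hh|apply Rmin_l]).
      assert (Hh2 : Rabs h < x) by (eapply Rlt_le_trans; [exact Hh|apply Rmin_r]).
      assert (Hxh : 0 <= x + h) by (revert Hh2; unfold Rabs; destruct (Rcase_abs h); lra).
      unfold ge. destruct (Rle_dec 0 (x + h)) as [_|C]; [|lra].
      destruct (Rle_dec 0 x) as [_|C]; [|lra]. apply H; auto. }
  assert (HI : is_RInt ge' a b (minus (ge b) (ge a))).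
  { apply (@is_RInt_derive R_CompleteNormedModule).
    - intros x Hx. rewrite Rmin_left, Rmax_right in Hx by lra. apply HD. lra.
    - intros x Hx. rewrite Rmin_left, Rmax_right in Hx by lra. apply cont_ext0; auto. lra. }
  apply is_RInt_unique.
  unfold ge in HI. destruct (Rle_dec 0 b) as [_|C]; [|lra].
  destruct (Rle_dec 0 a) as [_|C]; [|lra].
  eapply is_RInt_ext; [|exact HI].
  intros x Hx. rewrite Rmin_left, Rmax_right in Hx by lra. unfold ge'. rewrite Rmax_right; auto. lra.
Qed.

Lemma int_plus u v a b : cont_on u -> cont_on v -> 0 <= a -> a <= b ->
  RInt (fun s => u s + v s) a b = RInt u a b + RInt v a b.
Proof. intros. apply (RInt_plus u v); apply ex_int; auto. Qed.
Lemma int_minus u v a b : cont_on u -> cont_on v -> 0 <= a -> a <= b ->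
  RInt (fun s => u s - v s) a b = RInt u a b - RInt v a b.
Proof. intros. apply (RInt_minus u v); apply ex_int; auto. Qed.
Lemma int_scal c u a b : cont_on u -> 0 <= a -> a <= b ->
  RInt (fun s => c * u s) a b = c * RInt u a b.
Proof. intros. apply (RInt_scal u); apply ex_int; auto. Qed.
Lemma int_const c a b : RInt (fun _ => c) a b = c * (b - a).
Proof. rewrite RInt_const. simpl. change (scal (b - a) c) with ((b - a) * c). ring. Qed.
Lemma int_le u v a b : cont_on u -> cont_on v -> 0 <= a -> a <= b ->
  (forall s, a <= s <= b -> u s <= v s) -> RInt u a b <= RInt v a b.
Proof. intros. apply RInt_le; try apply ex_int; auto. intros x Hx; apply H3; lra. Qed.
Lemma int_ge0 u a b : cont_on u -> 0 <= a -> a <= b ->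
  (forall s, a <= s <= b -> 0 <= u s) -> 0 <= RInt u a b.
Proof. intros. apply RInt_ge_0; try apply ex_int; auto. intros x Hx; apply H2; lra. Qed.

Lemma deriv_scal c u u' : deriv_on u u' -> deriv_on (fun s => c * u s) (fun s => c * u' s).
Proof.
  intros H. eapply deriv_ext; [| |apply (deriv_mult _ _ _ _ (deriv_const c) H)].
  intros; reflexivity. intros; simpl; ring.
Qed.

Definition GL (h : R -> R) (T : R) := Rbar_glb (fun z => exists t, T <= t /\ z = Finite (h t)).

Lemma GL_le h T t : T <= t -> Rbar_le (GL h T) (h t).
Proof.
  intros H. unfold GL, Rbar_glb. destruct (Rbar_ex_glb _) as [g [Hlb Hgr0]]. simpl.
  apply Hlb. exists t; auto.
Qed.

Lemma GL_ge h T m : (forall t, T <= t -> m <= h t) -> Rbar_le m (GL h T).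
Proof.
  intros H. unfold GL, Rbar_glb. destruct (Rbar_ex_glb _) as [g [Hlb0 Hgr]]. simpl.
  apply (Hgr (Finite m)). intros x [t [Ht ->]]. simpl. apply H; auto.
Qed.

Lemma LI_eq h : liminf_infty h = Rbar_lub (fun y => exists T, y = GL h T).
Proof. reflexivity. Qed.

Lemma LI_lower h S : liminf_infty h = Finite S ->
  forall e, 0 < e -> exists T, forall t, T <= t -> S - e <= h t.
Proof.
  rewrite LI_eq. unfold Rbar_lub. destruct (Rbar_ex_lub _) as [l [Hub Hleast]]. simpl.
  intros -> e He. apply NNPP. intros Hn.
  assert (Hu : Rbar_is_upper_bound (fun y => exists T, y = GL h T) (Finite (S - e))).
  { intros y [T ->].
    destruct (not_all_ex_not _ _ (not_ex_all_not _ _ Hn T)) as [t Ht].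
    apply imply_to_and in Ht. destruct Ht as [Ht1 Ht2].
    eapply Rbar_le_trans; [apply (GL_le h T t Ht1)|]. simpl. lra. }
  specialize (Hleast _ Hu). simpl in Hleast. lra.
Qed.

Lemma LI_ge h m : (forall e, 0 < e -> exists T, forall t, T <= t -> m - e <= h t) ->
  Rbar_le m (liminf_infty h).
Proof.
  intros H. rewrite LI_eq. unfold Rbar_lub. destruct (Rbar_ex_lub _) as [l [Hub Hleast]]. simpl.
  assert (K : forall e, 0 < e -> Rbar_le (m - e) l).
  { intros e He. destruct (H e He) as [T HT].
    eapply Rbar_le_trans; [apply (GL_ge h T _ HT)|]. apply Hub. exists T; auto. }
  destruct l as [l| |]; simpl; auto.
  - apply Rnot_lt_le. intros C. specialize (K ((m - l)/2) ltac:(lra)). simpl in K. lra.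
  - specialize (K 1 Rlt_0_1). simpl in K. exact K.
Qed.

Lemma LI_le h m : (forall e, 0 < e -> exists T, forall t, T <= t -> h t <= m + e) ->
  Rbar_le (liminf_infty h) m.
Proof.
  intros H. rewrite LI_eq. unfold Rbar_lub. destruct (Rbar_ex_lub _) as [l [Hub Hleast]]. simpl.
  assert (K : forall e, 0 < e -> Rbar_le l (m + e)).
  { intros e He. destruct (H e He) as [T0 HT]. apply Hleast.
    intros y [T ->]. eapply Rbar_le_trans; [apply (GL_le h T (Rmax T T0)), Rmax_l|].
    simpl. apply HT, Rmax_r. }
  destruct l as [l| |]; simpl; auto.
  - apply Rnot_lt_le. intros C. specialize (K ((l - m)/2) ltac:(lra)). simpl in K. lra.
  - specialize (K 1 Rlt_0_1). simpl in K. exact K.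
Qed.

Definition pw (a : R) (g k : R -> R) (x : R) := if Rle_dec x a then g x else k x.

Lemma pw_loc_l a g k x : x < a -> locally x (fun y => g y = pw a g k y).
Proof.
  intros H. assert (He : 0 < a - x) by lra. exists (mkposreal _ He). intros y Hy.
  change (Rabs (y - x) < a - x) in Hy. unfold pw. destruct (Rle_dec y a); auto.
  revert Hy; unfold Rabs; destruct (Rcase_abs _); lra.
Qed.
Lemma pw_loc_r a g k x : a < x -> locally x (fun y => k y = pw a g k y).
Proof.
  intros H. assert (He : 0 < x - a) by lra. exists (mkposreal _ He). intros y Hy.
  change (Rabs (y - x) < x - a) in Hy. unfold pw. destruct (Rle_dec y a); auto.
  revert Hy; unfold Rabs; destruct (Rcase_abs _); lra.
Qed.

Lemma pw_derive a g k g' k' :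
  (forall x, is_derive g x (g' x)) -> (forall x, is_derive k x (k' x)) ->
  g a = k a -> g' a = k' a ->
  forall x, is_derive (pw a g k) x (pw a g' k' x).
Proof.
  intros Hg Hk E E' x.
  destruct (Rtotal_order x a) as [Hx|[Hx|Hx]].
  - unfold pw at 2; destruct (Rle_dec x a); [|lra].
    eapply is_derive_ext_loc; [apply pw_loc_l; exact Hx|apply Hg].
  - subst x. unfold pw at 2; destruct (Rle_dec a a) as [_|C]; [|lra].
    apply is_derive_Reals. intros eps Heps.
    destruct (proj1 (is_derive_Reals _ _ _) (Hg a) eps Heps) as [d1 H1].
    destruct (proj1 (is_derive_Reals _ _ _) (Hk a) eps Heps) as [d2 H2].
    exists (mkposreal _ (Rmin_pos _ _ (cond_pos d1) (cond_pos d2))). intros h Hh0 Hh. simpl in Hh.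
    unfold pw. destruct (Rle_dec a a) as [_|C]; [|lra].
    destruct (Rle_dec (a + h) a).
    + apply H1; auto. eapply Rlt_le_trans; [exact Hh|apply Rmin_l].
    + rewrite E, E'. apply H2; auto. eapply Rlt_le_trans; [exact Hh|apply Rmin_r].
  - unfold pw at 2; destruct (Rle_dec x a); [lra|].
    eapply is_derive_ext_loc; [apply pw_loc_r; exact Hx|apply Hk].
Qed.

Lemma pw_cont a g k : (forall x, continuous g x) -> (forall x, continuous k x) ->
  g a = k a -> forall x, continuous (pw a g k) x.
Proof.
  intros Hg Hk E x.
  destruct (Rtotal_order x a) as [Hx|[Hx|Hx]].
  - eapply continuous_ext_loc; [apply pw_loc_l; exact Hx|].
    apply Hg.
  - subst x. apply filterlim_locally. intros eps.
    destruct (proj1 (filterlim_locally _ _) (Hg a) eps) as [d1 H1].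
    destruct (proj1 (filterlim_locally _ _) (Hk a) eps) as [d2 H2].
    exists (mkposreal _ (Rmin_pos _ _ (cond_pos d1) (cond_pos d2))). intros y Hy.
    change (Rabs (y - a) < Rmin d1 d2) in Hy.
    unfold pw. destruct (Rle_dec a a) as [_|C]; [|lra].
    destruct (Rle_dec y a).
    + apply H1. change (Rabs (y - a) < d1). eapply Rlt_le_trans; [exact Hy|apply Rmin_l].
    + rewrite E. apply H2. change (Rabs (y - a) < d2). eapply Rlt_le_trans; [exact Hy|apply Rmin_r].
  - eapply continuous_ext_loc; [apply pw_loc_r; exact Hx|].
    apply Hk.
Qed.

Section Phi.
Variable L0 : R.
Hypothesis HL0 : 1 <= L0.

Definition h0 x := L0 + (x - L0) * exp (- (x - L0) ^ 2).
Definition h1 x := exp (- (x - L0) ^ 2) * (1 - 2 * (x - L0) ^ 2).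
Definition h2 x := exp (- (x - L0) ^ 2) * (4 * (x - L0) ^ 3 - 6 * (x - L0)).

Definition phi := pw L0 (fun x => x) h0.
Definition phi1 := pw L0 (fun _ => 1) h1.
Definition phi2 := pw L0 (fun _ => 0) h2.

Lemma phi_derive x : is_derive phi x (phi1 x).
Proof.
  apply pw_derive.
  - intros y. auto_derive; auto.
  - intros y. unfold h0, h1. auto_derive; auto.
    replace (exp (- ((y + - L0) * ((y + - L0) * 1)))) with (exp (- (y - L0) ^ 2)) by (f_equal; ring); ring.
  - unfold h0. replace (L0 - L0) with 0 by ring. simpl. ring.
  - unfold h1. replace (L0 - L0) with 0 by ring. simpl. replace (- (0 * (0 * 1))) with 0 by ring. rewrite exp_0. ring.
Qed.

Lemma phi1_derive x : is_derive phi1 x (phi2 x).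
Proof.
  apply pw_derive.
  - intros y. auto_derive; auto.
  - intros y. unfold h1, h2. auto_derive; auto.
    replace (exp (- ((y + - L0) * ((y + - L0) * 1)))) with (exp (- (y - L0) ^ 2)) by (f_equal; ring); ring.
  - unfold h1. replace (L0 - L0) with 0 by ring. simpl. replace (- (0 * (0 * 1))) with 0 by ring. rewrite exp_0. ring.
  - unfold h2. replace (L0 - L0) with 0 by ring. simpl. ring.
Qed.

Lemma phi2_cont x : continuous phi2 x.
Proof.
  apply pw_cont.
  - intros y. apply continuous_const.
  - intros y. apply (ex_derive_continuous (V := R_NormedModule)). unfold h2. auto_derive; auto.
  - unfold h2. replace (L0 - L0) with 0 by ring. simpl. ring.
Qed.

End Phi.

Lemma exp_m_1 v : 0 <= v -> exp (- v) * (1 + v) <= 1.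
Proof.
  intros Hv. pose proof (exp_ineq1_le v). pose proof (exp_pos (- v)).
  assert (E : exp (- v) * exp v = 1) by (rewrite <- exp_plus; replace (- v + v) with 0 by ring; apply exp_0).
  nra.
Qed.

Lemma exp_m_2 v : 0 <= v -> exp (- v) * (1 + v / 2) ^ 2 <= 1.
Proof.
  intros Hv. pose proof (exp_ineq1_le (v / 2)). pose proof (exp_pos (- v)). pose proof (exp_pos (v/2)).
  assert (E : exp (- v) * (exp (v / 2) * exp (v / 2)) = 1).
  { rewrite <- !exp_plus. replace (- v + (v / 2 + v / 2)) with 0 by field. apply exp_0. }
  assert (K : (1 + v / 2) ^ 2 <= exp (v / 2) * exp (v / 2)) by nra.
  nra.
Qed.

Lemma exp_le1 v : 0 <= v -> exp (- v) <= 1.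
Proof. intros Hv. pose proof (exp_m_1 v Hv). pose proof (exp_pos (- v)). nra. Qed.

Section PhiB.
Variable L0 : R.
Hypothesis HL0 : 1 <= L0.

Lemma phi_le_id x : x <= L0 -> phi L0 x = x.
Proof. intros H. unfold phi, pw. destruct (Rle_dec x L0); auto; lra. Qed.

Lemma phi_gt_id x : L0 < x -> phi L0 x = L0 + (x - L0) * exp (- (x - L0) ^ 2).
Proof. intros H. unfold phi, pw. destruct (Rle_dec x L0); [lra|auto]. Qed.

Ltac ue x := set (u := x - L0); set (e := exp (- u ^ 2));
  assert (He0 : 0 < e) by apply exp_pos;
  assert (He1 : e * (1 + u ^ 2) <= 1) by (apply exp_m_1; nra).

Lemma phi_gt x : L0 < x -> L0 < phi L0 x.
Proof. intros H. rewrite phi_gt_id; auto. ue x. assert (0 < u) by (unfold u; lra). nra. Qed.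

Lemma phi_pos x : 0 < x -> 0 < phi L0 x.
Proof. intros H. destruct (Rle_dec x L0). rewrite phi_le_id; auto. pose proof (phi_gt x). lra. Qed.

Lemma phi_nonneg x : 0 <= x -> 0 <= phi L0 x.
Proof. intros H. destruct (Req_dec x 0). subst. rewrite phi_le_id; lra. pose proof (phi_pos x). lra. Qed.

Lemma phi_le x : 0 <= x -> phi L0 x <= x.
Proof.
  intros H. destruct (Rle_dec x L0). rewrite phi_le_id; lra.
  rewrite phi_gt_id by lra. ue x. assert (0 < u) by (unfold u; lra).
  assert (u * e <= u) by nra. fold u e. unfold u in *. lra.
Qed.

Lemma phi_bound x : phi L0 x <= L0 + 1.
Proof.
  destruct (Rle_dec x L0). rewrite phi_le_id; lra.
  rewrite phi_gt_id by lra. ue x. nra.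
Qed.

Lemma phi1_bound x : Rabs (phi1 L0 x) <= 2.
Proof.
  unfold phi1, pw. destruct (Rle_dec x L0). rewrite Rabs_R1; lra.
  unfold h1. fold (x - L0). ue x. fold u e. apply Rabs_le. split; nra.
Qed.

Lemma phi2_bound x : Rabs (phi2 L0 x) <= 20.
Proof.
  unfold phi2, pw. destruct (Rle_dec x L0). rewrite Rabs_R0; lra.
  unfold h2. set (u := x - L0). set (e := exp (- u ^ 2)).
  assert (He0 : 0 < e) by apply exp_pos.
  assert (He2 : e * (1 + u ^ 2 / 2) ^ 2 <= 1) by (apply exp_m_2; nra).
  assert (K : Rabs (4 * u ^ 3 - 6 * u) <= 20 * (1 + u ^ 2 / 2) ^ 2).
  { apply Rabs_le. split; nra. }
  rewrite Rabs_mult, (Rabs_right e) by lra.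
  apply Rle_trans with (e * (20 * (1 + u ^ 2 / 2) ^ 2)).
  apply Rmult_le_compat_l; lra. nra.
Qed.

Lemma phi_ln x : 0 < x -> - x <= ln (phi L0 x) - ln x.
Proof.
  intros H. destruct (Rle_dec x L0). rewrite phi_le_id; auto. lra.
  pose proof (phi_gt x ltac:(lra)).
  assert (0 < ln (phi L0 x)) by (rewrite <- ln_1; apply ln_increasing; lra).
  assert (ln x <= x - 1).
  { pose proof (exp_ineq1_le (ln x)). rewrite exp_ln in H2; lra. }
  lra.
Qed.

Lemma phi_ln_bound x : 0 < x -> ln (phi L0 x) <= ln (L0 + 1).
Proof. intros H. apply ln_le. apply phi_pos; auto. apply phi_bound. Qed.

End PhiB.

Lemma cont_opp u : cont_on u -> cont_on (fun s => - u s).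
Proof. intros H. eapply (cont_comp Ropp); [|exact H]. intros. apply (ex_derive_continuous (V := R_NormedModule)). auto_derive. auto. Qed.

Ltac cont1 := match goal with
 | |- cont_on (fun s => _ - _) => apply cont_minus
 | |- cont_on (fun s => _ + _) => apply cont_plus
 | |- cont_on (fun s => - _) => apply cont_opp
 | |- cont_on (fun s => _ * _) => apply cont_mult
 | |- cont_on (fun s => _ / _) => apply cont_div
 | |- cont_on (fun s => / _) => apply cont_inv
 | |- cont_on (fun s => Rabs _) => apply cont_abs
 | |- cont_on (fun s => _ ^ 2) => apply cont_pow2
 | |- cont_on (fun _ => ?c) => apply cont_const
 | |- cont_on _ => assumption
 | |- forall t, _ -> _ <> 0 => let t := fresh "t" in let H := fresh "H" in intros t H; cbv beta; solve [auto]
 end.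
Ltac cont := repeat cont1.

Lemma Evan_eps g1 g2 M M1 M2 : E_vanishes g1 g2 M M1 M2 ->
  forall e, 0 < e -> exists N, forall t, N < t -> Rabs (E_fun g1 g2 M M1 M2 t / t) < e.
Proof.
  intros H e He. destruct (proj1 (filterlim_locally _ _) H (mkposreal e He)) as [N HN].
  exists N. intros t Ht. specialize (HN t Ht). change (Rabs (E_fun g1 g2 M M1 M2 t / t - 0) < e) in HN.
  rewrite Rminus_0_r in HN. exact HN.
Qed.

Lemma eps_Evan g1 g2 M M1 M2 :
  (forall e, 0 < e -> exists N, forall t, N < t -> Rabs (E_fun g1 g2 M M1 M2 t / t) < e) ->
  E_vanishes g1 g2 M M1 M2.
Proof.
  intros H. apply filterlim_locally. intros e. destruct (H e (cond_pos e)) as [N HN].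
  exists N. intros t Ht. change (Rabs (E_fun g1 g2 M M1 M2 t / t - 0) < e).
  rewrite Rminus_0_r. apply HN; auto.
Qed.

Lemma abs3 a b c : Rabs (a + b - c) <= Rabs a + Rabs b + Rabs c.
Proof.
  unfold Rminus. eapply Rle_trans; [apply Rabs_triang|]. rewrite Rabs_Ropp.
  pose proof (Rabs_triang a b). lra.
Qed.

Lemma div_lower t c X : 0 < t -> c * t <= X -> c <= / t * X.
Proof. intros Ht H. apply Rmult_le_reg_r with t; auto. replace (/ t * X * t) with X by (field; lra). exact H. Qed.
Lemma div_upper t c X : 0 < t -> X <= c * t -> / t * X <= c.
Proof. intros Ht H. apply Rmult_le_reg_r with t; auto. replace (/ t * X * t) with X by (field; lra). exact H. Qed.
Lemma div_lower' t c X : 0 < t -> c <= / t * X -> c * t <= X.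
Proof. intros Ht H. apply Rmult_le_compat_r with (r := t) in H; [|lra]. replace (/ t * X * t) with X in H by (field; lra). exact H. Qed.

Section Core.
Variables (r : R) (f L f1 f2 L1 L2 : R -> R) (S L0 : R).
Hypothesis Hr : 0 < r.
Hypothesis HLp : forall t, 0 <= t -> 0 < L t.
Hypothesis Hfd : deriv_on f f1.
Hypothesis Hf1d : deriv_on f1 f2.
Hypothesis Hf2c : cont_on f2.
Hypothesis HLd : deriv_on L L1.
Hypothesis HL1d : deriv_on L1 L2.
Hypothesis HL2c : cont_on L2.
Hypothesis HE : E_vanishes f1 f2 L L1 L2.
Hypothesis HS : S_val r f1 L L1 = Finite S.
Hypothesis HSp : 0 < S.
Hypothesis HL0 : 1 <= L0.
Hypothesis HL0S : PI ^ 2 / (8 * L0 ^ 2) <= S / 2.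

Let Lt := fun s => phi L0 (L s).
Let Lt1 := fun s => phi1 L0 (L s) * L1 s.
Let Lt2 := fun s => phi2 L0 (L s) * L1 s * L1 s + phi1 L0 (L s) * L2 s.
Let ft := fun s => f s + L s - Lt s.
Let ft1 := fun s => f1 s + L1 s - Lt1 s.
Let ft2 := fun s => f2 s + L2 s - Lt2 s.

Lemma cL : cont_on L. Proof. exact (deriv_cont _ _ HLd). Qed.
Lemma cL1 : cont_on L1. Proof. exact (deriv_cont _ _ HL1d). Qed.
Lemma cf1 : cont_on f1. Proof. exact (deriv_cont _ _ Hf1d). Qed.
Lemma cphi : cont_on (fun s => phi L0 (L s)).
Proof. apply cont_comp; [|exact cL]. intros t _. apply (ex_derive_continuous (V := R_NormedModule)).
  eexists; apply phi_derive. Qed.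
Lemma cphi1 : cont_on (fun s => phi1 L0 (L s)).
Proof. apply cont_comp; [|exact cL]. intros t _. apply (ex_derive_continuous (V := R_NormedModule)).
  eexists; apply phi1_derive. Qed.
Lemma cphi2 : cont_on (fun s => phi2 L0 (L s)).
Proof. apply cont_comp; [|exact cL]. intros t _. apply phi2_cont. Qed.

Lemma dLt : deriv_on Lt Lt1.
Proof. apply (deriv_comp (phi L0) (phi1 L0)); auto. intros; apply phi_derive. Qed.
Lemma dLt1 : deriv_on Lt1 Lt2.
Proof.
  apply (deriv_mult (fun s => phi1 L0 (L s))); auto.
  apply (deriv_comp (phi1 L0) (phi2 L0)); auto. intros; apply phi1_derive.
Qed.
Lemma dft : deriv_on ft ft1.
Proof. apply deriv_minus; [apply deriv_plus; auto| apply dLt]. Qed.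
Lemma dft1 : deriv_on ft1 ft2.
Proof. apply deriv_minus; [apply deriv_plus; auto| apply dLt1]. Qed.
Lemma cLt2 : cont_on Lt2.
Proof. unfold Lt2. pose proof cphi1; pose proof cphi2; pose proof cL1. cont. Qed.
Lemma cft2 : cont_on ft2.
Proof. unfold ft2. pose proof cLt2. cont. Qed.


Lemma Lt_pos s : 0 <= s -> 0 < Lt s.
Proof. intros; apply phi_pos; auto. Qed.
Lemma Lt_le s : 0 <= s -> Lt s <= L s.
Proof. intros; apply phi_le; auto. left; auto. Qed.
Lemma Lt_bnd s : Lt s <= L0 + 1.
Proof. apply phi_bound. Qed.

Let K := 20 * (L0 + 1).

Lemma p1 s : 0 <= s -> Rabs (ft1 s) * Lt s <= Rabs (f1 s) * L s + 3 * (Rabs (L1 s) * L s).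
Proof.
  intros Hs. pose proof (Lt_pos s Hs). pose proof (Lt_le s Hs). pose proof (phi1_bound L0 (L s)).
  pose proof (Rabs_pos (f1 s)). pose proof (Rabs_pos (L1 s)).
  assert (HA : Rabs (ft1 s) <= Rabs (f1 s) + 3 * Rabs (L1 s)).
  { unfold ft1, Lt1. replace (f1 s + L1 s - phi1 L0 (L s) * L1 s) with (f1 s + (1 - phi1 L0 (L s)) * L1 s) by ring.
    eapply Rle_trans; [apply Rabs_triang|]. rewrite Rabs_mult.
    assert (Rabs (1 - phi1 L0 (L s)) <= 3) by (pose proof (Rabs_triang 1 (- phi1 L0 (L s))); rewrite Rabs_Ropp, Rabs_R1 in *; unfold Rminus; lra).
    pose proof (Rabs_pos (1 - phi1 L0 (L s))). nra. }
  pose proof (Rabs_pos (ft1 s)). nra.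
Qed.

Lemma p2 s : 0 <= s -> Rabs (ft2 s) * Lt s <= Rabs (f2 s) * L s + 3 * (Rabs (L2 s) * L s) + K * L1 s ^ 2.
Proof.
  intros Hs. pose proof (Lt_pos s Hs). pose proof (Lt_le s Hs). pose proof (phi1_bound L0 (L s)).
  pose proof (phi2_bound L0 (L s)). pose proof (Lt_bnd s).
  pose proof (Rabs_pos (f2 s)). pose proof (Rabs_pos (L2 s)).
  assert (HA : Rabs (ft2 s) <= Rabs (f2 s) + 3 * Rabs (L2 s) + 20 * L1 s ^ 2).
  { unfold ft2, Lt2. replace (f2 s + L2 s - (phi2 L0 (L s) * L1 s * L1 s + phi1 L0 (L s) * L2 s)) with
      (f2 s + (1 - phi1 L0 (L s)) * L2 s - phi2 L0 (L s) * L1 s ^ 2) by ring.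
    eapply Rle_trans; [apply abs3|]. rewrite !Rabs_mult.
    assert (Rabs (1 - phi1 L0 (L s)) <= 3) by (pose proof (Rabs_triang 1 (- phi1 L0 (L s))); rewrite Rabs_Ropp, Rabs_R1 in *; unfold Rminus; lra).
    pose proof (Rabs_pos (1 - phi1 L0 (L s))). pose proof (Rabs_pos (phi2 L0 (L s))).
    rewrite (Rabs_right (L1 s ^ 2)) by (apply Rle_ge; nra). nra. }
  pose proof (Rabs_pos (ft2 s)). unfold K.
  assert (0 <= L1 s ^ 2) by nra. nra.
Qed.

Lemma p3 s : 0 <= s -> Rabs (Lt1 s) * Lt s <= 2 * (Rabs (L1 s) * L s).
Proof.
  intros Hs. pose proof (Lt_pos s Hs). pose proof (Lt_le s Hs). pose proof (phi1_bound L0 (L s)).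
  pose proof (Rabs_pos (L1 s)). pose proof (Rabs_pos (phi1 L0 (L s))).
  unfold Lt1. rewrite Rabs_mult.
  assert (X : Rabs (phi1 L0 (L s)) * Lt s <= 2 * L s) by nra.
  replace (Rabs (phi1 L0 (L s)) * Rabs (L1 s) * Lt s) with ((Rabs (phi1 L0 (L s)) * Lt s) * Rabs (L1 s)) by ring.
  nra.
Qed.

Lemma p4 s : 0 <= s -> Rabs (Lt2 s) * Lt s <= K * L1 s ^ 2 + 2 * (Rabs (L2 s) * L s).
Proof.
  intros Hs. pose proof (Lt_pos s Hs). pose proof (Lt_le s Hs). pose proof (phi1_bound L0 (L s)).
  pose proof (phi2_bound L0 (L s)). pose proof (Lt_bnd s).
  pose proof (Rabs_pos (L2 s)). pose proof (Rabs_pos (phi2 L0 (L s))). pose proof (Rabs_pos (phi1 L0 (L s))).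
  assert (HA : Rabs (Lt2 s) <= 20 * L1 s ^ 2 + 2 * Rabs (L2 s)).
  { unfold Lt2. eapply Rle_trans; [apply Rabs_triang|].
    replace (phi2 L0 (L s) * L1 s * L1 s) with (phi2 L0 (L s) * (L1 s ^ 2)) by ring.
    rewrite !Rabs_mult. rewrite (Rabs_right (L1 s ^ 2)) by (apply Rle_ge; nra).
    assert (0 <= L1 s ^ 2) by nra. pose proof (Rabs_pos (L2 s)). nra. }
  pose proof (Rabs_pos (Lt2 s)). unfold K. assert (0 <= L1 s ^ 2) by nra. nra.
Qed.

Let Eo t := E_fun f1 f2 L L1 L2 t.
Let a1 t := Rabs (f1 t) * L t.
Let I2 t := RInt (fun s => Rabs (f2 s) * L s) 0 t.
Let a3 t := Rabs (L1 t) * L t.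
Let I4 t := RInt (fun s => Rabs (L2 s) * L s) 0 t.

Lemma Eo_eq t : Eo t = a1 t + I2 t + / 2 * a3 t + / 2 * I4 t.
Proof. unfold Eo, E_fun, a1, I2, a3, I4. ring. Qed.

Ltac sc := first [solve [lra] | solve [cont]].
Ltac ctx := pose proof cL; pose proof cL1; pose proof cf1; pose proof cphi; pose proof cphi1;
  pose proof cphi2.

Lemma I2_nn t : 0 <= t -> 0 <= I2 t.
Proof. intros Ht. ctx. apply int_ge0; try sc. intros s Hs. pose proof (HLp s ltac:(lra)).
  pose proof (Rabs_pos (f2 s)). nra. Qed.
Lemma I4_nn t : 0 <= t -> 0 <= I4 t.
Proof. intros Ht. ctx. apply int_ge0; try sc. intros s Hs. pose proof (HLp s ltac:(lra)).
  pose proof (Rabs_pos (L2 s)). nra. Qed.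
Lemma a1_nn t : 0 <= t -> 0 <= a1 t.
Proof. intros Ht. pose proof (HLp t Ht). pose proof (Rabs_pos (f1 t)). unfold a1. nra. Qed.
Lemma a3_nn t : 0 <= t -> 0 <= a3 t.
Proof. intros Ht. pose proof (HLp t Ht). pose proof (Rabs_pos (L1 t)). unfold a3. nra. Qed.

Lemma J_bound t : 0 <= t -> RInt (fun s => L1 s ^ 2) 0 t <= a3 t + Rabs (L1 0) * L 0 + I4 t.
Proof.
  intros Ht. ctx.
  assert (F := FTC (fun s => L1 s * L s) (fun s => L2 s * L s + L1 s * L1 s) 0 t
     (deriv_mult _ _ _ _ HL1d HLd) ltac:(cont) (Rle_refl 0) Ht).
  eapply Rle_trans.
  { apply (int_le _ (fun s => (L2 s * L s + L1 s * L1 s) + Rabs (L2 s) * L s)); try sc.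
    intros s Hs. pose proof (HLp s ltac:(lra)). pose proof (Rle_abs (- L2 s)). rewrite Rabs_Ropp in *.
    nra. }
  rewrite int_plus; try sc. rewrite F. fold (I4 t). unfold a3.
  pose proof (Rle_abs (L1 t * L t)). pose proof (Rle_abs (- (L1 0 * L 0))). rewrite Rabs_Ropp in *.
  rewrite !Rabs_mult in *. rewrite (Rabs_right (L t)) in * by (apply Rle_ge, Rlt_le, HLp; lra).
  rewrite (Rabs_right (L 0)) in * by (apply Rle_ge, Rlt_le, HLp; lra). lra.
Qed.

Lemma cLt : cont_on Lt. Proof. exact cphi. Qed.
Lemma cLt1 : cont_on Lt1. Proof. unfold Lt1. ctx. cont. Qed.
Lemma cft1 : cont_on ft1. Proof. unfold ft1. ctx. pose proof cLt1. cont. Qed.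

Lemma En_nn t : 0 <= t -> 0 <= E_fun ft1 ft2 Lt Lt1 Lt2 t.
Proof.
  intros Ht. ctx. pose proof cLt; pose proof cLt2; pose proof cft2. unfold E_fun.
  pose proof (Lt_pos t Ht). pose proof (Rabs_pos (ft1 t)). pose proof (Rabs_pos (Lt1 t)).
  assert (0 <= RInt (fun s => Rabs (ft2 s) * Lt s) 0 t).
  { apply int_ge0; try sc. intros s Hs. pose proof (Lt_pos s ltac:(lra)). pose proof (Rabs_pos (ft2 s)). nra. }
  assert (0 <= RInt (fun s => Rabs (Lt2 s) * Lt s) 0 t).
  { apply int_ge0; try sc. intros s Hs. pose proof (Lt_pos s ltac:(lra)). pose proof (Rabs_pos (Lt2 s)). nra. }
  nra.
Qed.

Lemma En_bound t : 0 <= t ->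
  E_fun ft1 ft2 Lt Lt1 Lt2 t <= (8 + 3 * K) * Eo t + 3 / 2 * K * (Rabs (L1 0) * L 0).
Proof.
  intros Ht. ctx. pose proof cLt; pose proof cLt2; pose proof cft2.
  rewrite Eo_eq. unfold E_fun.
  assert (HK : 0 < K) by (unfold K; lra).
  pose proof (J_bound t Ht) as HJ. pose proof (I2_nn t Ht). pose proof (I4_nn t Ht).
  pose proof (a1_nn t Ht). pose proof (a3_nn t Ht).
  set (J := RInt (fun s => L1 s ^ 2) 0 t) in *.
  assert (B2 : RInt (fun s => Rabs (ft2 s) * Lt s) 0 t <= I2 t + 3 * I4 t + K * J).
  { eapply Rle_trans.
    { apply (int_le _ (fun s => (Rabs (f2 s) * L s + 3 * (Rabs (L2 s) * L s)) + K * L1 s ^ 2)); try sc.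
      intros s Hs. apply p2. lra. }
    rewrite int_plus; try sc. rewrite int_plus; try sc.
    rewrite !int_scal; try sc. fold (I2 t) (I4 t). apply Rle_refl. }
  assert (B4 : RInt (fun s => Rabs (Lt2 s) * Lt s) 0 t <= K * J + 2 * I4 t).
  { eapply Rle_trans.
    { apply (int_le _ (fun s => K * L1 s ^ 2 + 2 * (Rabs (L2 s) * L s))); try sc.
      intros s Hs. apply p4. lra. }
    rewrite int_plus; try sc.
    rewrite !int_scal; try sc. fold (I4 t). apply Rle_refl. }
  pose proof (p1 t Ht) as B1. pose proof (p3 t Ht) as B3. fold (a1 t) (a3 t) in B1, B3.
  assert (KJ : K * J <= K * (a3 t + Rabs (L1 0) * L 0 + I4 t)) by (apply Rmult_le_compat_l; lra).
  assert (0 <= K * a3 t) by nra. assert (0 <= K * I4 t) by nra.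
  nra.
Qed.

Lemma En_van : E_vanishes ft1 ft2 Lt Lt1 Lt2.
Proof.
  apply eps_Evan. intros e He.
  set (C := 8 + 3 * K). set (D := 3 / 2 * K * (Rabs (L1 0) * L 0)).
  assert (HC : 0 < C) by (unfold C, K; lra).
  assert (HD : 0 <= D).
  { unfold D, K. pose proof (HLp 0 (Rle_refl 0)). pose proof (Rabs_pos (L1 0)).
    repeat apply Rmult_le_pos; lra. }
  destruct (Evan_eps _ _ _ _ _ HE (e / (2 * C)) ltac:(apply Rdiv_lt_0_compat; lra)) as [N HN].
  exists (Rmax N (Rmax 1 (2 * D / e))). intros t Ht.
  assert (Ht1 : N < t) by (eapply Rle_lt_trans; [apply Rmax_l|exact Ht]).
  assert (Ht2 : 1 < t) by (eapply Rle_lt_trans; [eapply Rle_trans; [apply Rmax_l|apply Rmax_r]|exact Ht]).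
  assert (Ht3 : 2 * D / e < t) by (eapply Rle_lt_trans; [eapply Rle_trans; [apply Rmax_r|apply Rmax_r]|exact Ht]).
  specialize (HN t Ht1). fold (Eo t) in HN.
  pose proof (En_nn t ltac:(lra)). pose proof (En_bound t ltac:(lra)). fold C D in H0.
  rewrite Rabs_right by (apply Rle_ge, Rdiv_le_0_compat; lra).
  assert (HEo : Eo t / t < e / (2 * C)) by (pose proof (Rle_abs (Eo t / t)); lra).
  assert (X1 : C * (Eo t / t) < e / 2).
  { apply Rmult_lt_compat_l with (r := C) in HEo; auto. replace (C * (e / (2 * C))) with (e / 2) in HEo by (field; lra). exact HEo. }
  assert (X2 : D / t < e / 2).
  { apply Rmult_lt_reg_r with t; [lra|]. replace (D / t * t) with D by (field; lra).
    apply Rmult_lt_compat_l with (r := e / 2) in Ht3; [|lra]. replace (e / 2 * (2 * D / e)) with D in Ht3 by (field; lra). lra. }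
  apply Rle_lt_trans with (C * (Eo t / t) + D / t); [|lra].
  replace (C * (Eo t / t) + D / t) with ((C * Eo t + D) / t) by (field; lra).
  apply Rmult_le_compat_r; [left; apply Rinv_0_lt_compat; lra|]. exact H0.
Qed.

Let A s := r - / 2 * (f1 s) ^ 2 - PI ^ 2 / (8 * (L s) ^ 2) + L1 s / (2 * L s).
Let B s := r - / 2 * (ft1 s) ^ 2 - PI ^ 2 / (8 * (Lt s) ^ 2) + Lt1 s / (2 * Lt s).

Lemma nzL t : 0 <= t -> L t <> 0. Proof. intros H; pose proof (HLp t H); lra. Qed.
Lemma nzLt t : 0 <= t -> Lt t <> 0. Proof. intros H; pose proof (Lt_pos t H); lra. Qed.
Lemma nz2L t : 0 <= t -> 2 * L t <> 0. Proof. intros H; pose proof (HLp t H); lra. Qed.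
Lemma nz2Lt t : 0 <= t -> 2 * Lt t <> 0. Proof. intros H; pose proof (Lt_pos t H); lra. Qed.
Lemma nz8L t : 0 <= t -> 8 * L t ^ 2 <> 0. Proof. intros H; pose proof (HLp t H); nra. Qed.
Lemma nz8Lt t : 0 <= t -> 8 * Lt t ^ 2 <> 0. Proof. intros H; pose proof (Lt_pos t H); nra. Qed.

Ltac ctx2 := ctx; pose proof cLt; pose proof cLt1; pose proof cft1; pose proof nzL; pose proof nzLt;
  pose proof nz2L; pose proof nz2Lt; pose proof nz8L; pose proof nz8Lt.

Lemma cA : cont_on A. Proof. unfold A. ctx2. cont. Qed.
Lemma cB : cont_on B. Proof. unfold B. ctx2. cont. Qed.

Lemma dlnLt : deriv_on (fun s => ln (Lt s)) (fun s => / Lt s * Lt1 s).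
Proof. apply (deriv_comp ln Rinv). intros; apply is_derive_ln, Lt_pos; auto. exact dLt. Qed.
Lemma dlnL : deriv_on (fun s => ln (L s)) (fun s => / L s * L1 s).
Proof. apply (deriv_comp ln Rinv). intros; apply is_derive_ln, HLp; auto. exact HLd. Qed.

Lemma B_upper t : 0 <= t -> RInt B 0 t <= r * t + / 2 * (ln (L0 + 1) - ln (Lt 0)).
Proof.
  intros Ht. ctx2. pose proof cB.
  eapply Rle_trans.
  { apply (int_le _ (fun s => r + / 2 * (/ Lt s * Lt1 s))); try sc.
    intros s Hs. unfold B. pose proof (Lt_pos s ltac:(lra)).
    assert (0 <= PI ^ 2 / (8 * Lt s ^ 2)) by (apply Rdiv_le_0_compat; nra).
    assert (0 <= / 2 * ft1 s ^ 2) by nra.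
    replace (Lt1 s / (2 * Lt s)) with (/ 2 * (/ Lt s * Lt1 s)) by (field; lra). lra. }
  rewrite int_plus; try sc. rewrite int_const, int_scal; try sc.
  rewrite (FTC _ _ 0 t dlnLt); try sc.
  pose proof (phi_ln_bound L0 HL0 (L t) (HLp t Ht)) as Hb. fold (Lt t) in Hb.
  lra.
Qed.

Let W s := / 2 * ln (Lt s) - / 2 * ln (L s) - f1 s * (L s - Lt s) - 9 / 2 * (L1 s * L s).
Let W' s := / 2 * (/ Lt s * Lt1 s) - / 2 * (/ L s * L1 s) - (f2 s * (L s - Lt s) + f1 s * (L1 s - Lt1 s))
   - 9 / 2 * (L2 s * L s + L1 s * L1 s).

Lemma dW : deriv_on W W'.
Proof.
  apply deriv_minus; [apply deriv_minus; [apply deriv_minus|]|].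
  - apply deriv_scal, dlnLt.
  - apply deriv_scal, dlnL.
  - apply deriv_mult; auto. apply deriv_minus; auto. apply dLt.
  - apply deriv_scal, deriv_mult; auto.
Qed.

Lemma cW' : cont_on W'.
Proof. unfold W'. ctx2. cont. Qed.

Lemma pt_lower s : 0 <= s ->
  A s + - (S / 2) + (-1) * (Rabs (f2 s) * L s + 9 / 2 * (Rabs (L2 s) * L s)) + W' s <= B s.
Proof.
  intros Hs. pose proof (HLp s Hs) as Hl. pose proof (Lt_pos s Hs) as Hlt. pose proof (Lt_le s Hs) as Hle.
  pose proof (phi1_bound L0 (L s)) as HX.
  unfold A, B, W', ft1.
  replace (Lt1 s / (2 * Lt s)) with (/ 2 * (/ Lt s * Lt1 s)) by (field; lra).
  replace (L1 s / (2 * L s)) with (/ 2 * (/ L s * L1 s)) by (field; lra).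
  assert (F2 : (L1 s - Lt1 s) ^ 2 <= 9 * L1 s ^ 2).
  { unfold Lt1. replace (L1 s - phi1 L0 (L s) * L1 s) with ((1 - phi1 L0 (L s)) * L1 s) by ring.
    assert (Rabs (1 - phi1 L0 (L s)) <= 3) by (pose proof (Rabs_triang 1 (- phi1 L0 (L s))); rewrite Rabs_Ropp, Rabs_R1 in *; unfold Rminus; lra).
    assert ((1 - phi1 L0 (L s)) ^ 2 <= 9).
    { pose proof (Rle_abs (1 - phi1 L0 (L s))). pose proof (Rle_abs (- (1 - phi1 L0 (L s)))).
      rewrite Rabs_Ropp in *. nra. }
    replace (((1 - phi1 L0 (L s)) * L1 s) ^ 2) with ((1 - phi1 L0 (L s)) ^ 2 * L1 s ^ 2) by ring.
    apply Rmult_le_compat_r; nra. }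
  assert (F3 : - (PI ^ 2 / (8 * L s ^ 2)) - S / 2 <= - (PI ^ 2 / (8 * Lt s ^ 2))).
  { assert (0 <= PI ^ 2 / (8 * L s ^ 2)) by (apply Rdiv_le_0_compat; nra).
    destruct (Rle_dec (L s) L0) as [Hc|Hc].
    - unfold Lt. rewrite phi_le_id; auto. lra.
    - pose proof (phi_gt L0 (L s) ltac:(lra)) as Hg. fold (Lt s) in Hg.
      assert (PI ^ 2 / (8 * Lt s ^ 2) <= PI ^ 2 / (8 * L0 ^ 2)).
      { apply Rmult_le_compat_l. pose proof PI_RGT_0; nra.
        apply Rinv_le_contravar. nra. nra. }
      lra. }
  assert (F5 : - (Rabs (f2 s) * L s) - f2 s * (L s - Lt s) <= 0).
  { pose proof (Rle_abs (- f2 s)). rewrite Rabs_Ropp in H. pose proof (Rle_abs (f2 s)). nra. }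
  assert (F6 : - (Rabs (L2 s) * L s) - L2 s * L s <= 0).
  { pose proof (Rle_abs (- L2 s)). rewrite Rabs_Ropp in H. nra. }
  nra.
Qed.
Lemma B_lower t : 0 <= t ->
  RInt A 0 t - S / 2 * t - 9 * Eo t - / 2 * L t - Rabs (W 0) <= RInt B 0 t.
Proof.
  intros Ht. ctx2. pose proof cA; pose proof cB; pose proof cW'.
  eapply Rle_trans; [|apply (int_le (fun s => A s + - (S / 2) + (-1) * (Rabs (f2 s) * L s + 9 / 2 * (Rabs (L2 s) * L s)) + W' s) B); try sc].
  2: { intros s Hs. apply pt_lower. lra. }
  rewrite int_plus; try sc. rewrite int_plus; try sc. rewrite int_plus; try sc.
  rewrite int_const, int_scal; try sc. rewrite int_plus; try sc. rewrite int_scal; try sc.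
  rewrite (FTC _ _ 0 t dW); try sc. fold (I2 t) (I4 t).
  rewrite Eo_eq. pose proof (I2_nn t Ht). pose proof (I4_nn t Ht). pose proof (a1_nn t Ht).
  pose proof (HLp t Ht) as Hl. pose proof (Lt_pos t Ht). pose proof (Lt_le t Ht).
  assert (W1 : - L t <= ln (Lt t) - ln (L t)) by (apply phi_ln; auto).
  assert (W2 : f1 t * (L t - Lt t) <= a1 t).
  { unfold a1. pose proof (Rle_abs (f1 t)). pose proof (Rle_abs (- f1 t)). rewrite Rabs_Ropp in *. nra. }
  assert (W3 : L1 t * L t <= a3 t).
  { unfold a3. pose proof (Rle_abs (L1 t)). nra. }
  assert (W4 : W 0 <= Rabs (W 0)) by apply Rle_abs.
  assert (W5 : W t = / 2 * ln (Lt t) - / 2 * ln (L t) - f1 t * (L t - Lt t) - 9 / 2 * (L1 t * L t)) by reflexivity. rewrite W5. set (IA := RInt A 0 t). lra.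
Qed.

Lemma L_growth d : 0 < d -> exists T, 0 < T /\ forall t, T <= t -> L t <= 2 * d * t.
Proof.
  intros Hd. ctx.
  destruct (Evan_eps _ _ _ _ _ HE (d ^ 2 / 8) ltac:(nra)) as [N HN].
  set (T0 := Rmax (N + 1) 1).
  assert (HT0 : 1 <= T0) by apply Rmax_r.
  assert (HT0N : N < T0) by (pose proof (Rmax_l (N + 1) 1); unfold T0; lra).
  assert (Hs : forall s, T0 <= s -> L1 s * L s + L s * L1 s <= d ^ 2 / 2 * s).
  { intros s Hs. specialize (HN s ltac:(lra)). fold (Eo s) in HN. rewrite Eo_eq in HN.
    pose proof (I2_nn s ltac:(lra)). pose proof (I4_nn s ltac:(lra)). pose proof (a1_nn s ltac:(lra)).
    pose proof (a3_nn s ltac:(lra)).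
    pose proof (Rle_abs ((a1 s + I2 s + / 2 * a3 s + / 2 * I4 s) / s)).
    assert (X : a1 s + I2 s + / 2 * a3 s + / 2 * I4 s < d ^ 2 / 8 * s).
    { apply Rmult_lt_reg_r with (/ s). apply Rinv_0_lt_compat; lra.
      replace (d ^ 2 / 8 * s * / s) with (d ^ 2 / 8) by (field; lra). unfold Rdiv in *. lra. }
    pose proof (HLp s ltac:(lra)). unfold a3 in *. pose proof (Rle_abs (L1 s)). nra. }
  set (c := L T0).
  assert (Hc : 0 < c) by (apply HLp; lra).
  exists (Rmax T0 (c / d)). split. { pose proof (Rmax_l T0 (c / d)). lra. }
  intros t Ht.
  assert (Ht0 : T0 <= t) by (pose proof (Rmax_l T0 (c / d)); lra).
  assert (Htc : c / d <= t) by (pose proof (Rmax_r T0 (c / d)); lra).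
  assert (F := FTC (fun s => L s * L s) (fun s => L1 s * L s + L s * L1 s) T0 t
     (deriv_mult _ _ _ _ HLd HLd) ltac:(cont) ltac:(lra) Ht0).
  assert (I : RInt (fun s => L1 s * L s + L s * L1 s) T0 t <= RInt (fun _ => d ^ 2 / 2 * t) T0 t).
  { apply int_le; try sc. intros s Hs0. eapply Rle_trans; [apply Hs; lra|]. nra. }
  rewrite int_const, F in I. fold c in I.
  assert (Q1 : d ^ 2 / 2 * t * (t - T0) <= d ^ 2 * t ^ 2).
  { assert (0 <= d ^ 2 * t) by (apply Rmult_le_pos; nra). nra. }
  assert (Q2 : 0 <= c * (d * t)) by (apply Rmult_le_pos; nra).
  assert (Q : L t * L t <= (c + d * t) ^ 2) by nra.
  pose proof (HLp t ltac:(lra)).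
  assert (L t <= c + d * t).
  { destruct (Rle_dec (L t) (c + d * t)) as [?|Hn]; auto. exfalso.
    assert (0 < d * t) by (apply Rmult_lt_0_compat; lra).
    assert ((L t - (c + d * t)) * (L t + (c + d * t)) > 0) by (apply Rmult_lt_0_compat; lra). nra. }
  assert (c <= d * t).
  { apply Rmult_le_reg_r with (/ d). apply Rinv_0_lt_compat; lra.
    replace (d * t * / d) with t by (field; lra). exact Htc. }
  lra.
Qed.

Lemma S_new : exists S', S_val r ft1 Lt Lt1 = Finite S' /\ S / 2 <= S' /\ 0 < S'.
Proof.
  assert (Eq : S_val r ft1 Lt Lt1 = liminf_infty (fun t => / t * RInt B 0 t)) by reflexivity.
  assert (HA : liminf_infty (fun t => / t * RInt A 0 t) = Finite S) by exact HS.
  assert (Lo : Rbar_le (S / 2) (liminf_infty (fun t => / t * RInt B 0 t))).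
  { apply LI_ge. intros e He.
    destruct (LI_lower _ S HA (e / 4) ltac:(lra)) as [T1 H1].
    destruct (Evan_eps _ _ _ _ _ HE (e / 36) ltac:(lra)) as [N2 H2].
    destruct (L_growth (e / 4) ltac:(lra)) as [T3 [HT3 H3]].
    set (W0 := Rabs (W 0)).
    exists (Rmax (Rmax T1 (N2 + 1)) (Rmax T3 (Rmax 1 (4 * W0 / e)))). intros t Ht.
    pose proof (Rmax_l (Rmax T1 (N2 + 1)) (Rmax T3 (Rmax 1 (4 * W0 / e)))).
    pose proof (Rmax_r (Rmax T1 (N2 + 1)) (Rmax T3 (Rmax 1 (4 * W0 / e)))).
    pose proof (Rmax_l T1 (N2 + 1)). pose proof (Rmax_r T1 (N2 + 1)).
    pose proof (Rmax_l T3 (Rmax 1 (4 * W0 / e))). pose proof (Rmax_r T3 (Rmax 1 (4 * W0 / e))).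
    pose proof (Rmax_l 1 (4 * W0 / e)). pose proof (Rmax_r 1 (4 * W0 / e)).
    assert (Htp : 0 < t) by lra.
    assert (i1 : (S - e / 4) * t <= RInt A 0 t) by (apply div_lower'; auto; apply H1; lra).
    assert (i2 : Eo t <= e / 36 * t).
    { specialize (H2 t ltac:(lra)). fold (Eo t) in H2. pose proof (Rle_abs (Eo t / t)) as Ha.
      assert (Hb : Eo t / t <= e / 36) by lra.
      apply Rmult_le_compat_r with (r := t) in Hb; [|lra].
      replace (Eo t / t * t) with (Eo t) in Hb by (field; lra). exact Hb. }
    assert (i3 : L t <= e / 2 * t) by (pose proof (H3 t ltac:(lra)); lra).
    assert (i4 : W0 <= e / 4 * t).
    { assert (Hc : 4 * W0 / e <= t) by lra.
      apply Rmult_le_compat_l with (r := e / 4) in Hc; [|lra].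
      replace (e / 4 * (4 * W0 / e)) with W0 in Hc by (field; lra). lra. }
    pose proof (B_lower t ltac:(lra)) as Hd. fold W0 in Hd.
    apply div_lower; auto. lra. }
  assert (Up : Rbar_le (liminf_infty (fun t => / t * RInt B 0 t)) r).
  { apply LI_le. intros e He.
    set (C := / 2 * (ln (L0 + 1) - ln (Lt 0))).
    exists (Rmax 1 (Rabs C / e)). intros t Ht.
    pose proof (Rmax_l 1 (Rabs C / e)). pose proof (Rmax_r 1 (Rabs C / e)).
    assert (Htp : 0 < t) by lra.
    pose proof (B_upper t ltac:(lra)) as Hb. fold C in Hb.
    assert (Rabs C <= e * t).
    { assert (Hc : Rabs C / e <= t) by lra. apply Rmult_le_compat_l with (r := e) in Hc; [|lra].
      replace (e * (Rabs C / e)) with (Rabs C) in Hc by (field; lra). exact Hc. }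
    pose proof (Rle_abs C).
    apply div_upper; auto. lra. }
  rewrite Eq. destruct (liminf_infty (fun t => / t * RInt B 0 t)) as [x| |]; simpl in Lo, Up; try contradiction.
  exists x. split; auto. split; auto. lra.
Qed.

Lemma core_all : (forall t, 0 <= t -> 0 < Lt t) /\
  exists ft1 ft2 Lt1 Lt2 : R -> R,
    C2_on ft ft1 ft2 /\ C2_on Lt Lt1 Lt2 /\
    E_vanishes ft1 ft2 Lt Lt1 Lt2 /\
    exists S' : R, S_val r ft1 Lt Lt1 = Finite S' /\ S / 2 <= S' /\ 0 < S'.
Proof.
  split. { intros; apply Lt_pos; auto. }
  exists ft1, ft2, Lt1, Lt2. split; [|split; [|split]].
  - split; [exact dft|split; [exact dft1|exact cft2]].
  - split; [exact dLt|split; [exact dLt1|exact cLt2]].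
  - exact En_van.
  - exact S_new.
Qed.

End Core.

Lemma L0S S : 0 < S -> PI ^ 2 / (8 * (Rmax (PI / (2 * sqrt S)) 1) ^ 2) <= S / 2.
Proof.
  intros HS. set (L0 := Rmax (PI / (2 * sqrt S)) 1).
  assert (H1 : 1 <= L0) by apply Rmax_r.
  assert (H2 : PI / (2 * sqrt S) <= L0) by apply Rmax_l.
  assert (Hq : 0 < sqrt S) by (apply sqrt_lt_R0; auto).
  assert (Hqq : sqrt S * sqrt S = S) by (apply sqrt_sqrt; lra).
  pose proof PI_RGT_0.
  assert (H3 : PI <= 2 * sqrt S * L0).
  { apply Rmult_le_compat_l with (r := 2 * sqrt S) in H2; [|lra].
    replace (2 * sqrt S * (PI / (2 * sqrt S))) with PI in H2 by (field; lra). exact H2. }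
  assert (H4 : PI ^ 2 <= 4 * S * L0 ^ 2).
  { rewrite <- Hqq. assert (0 <= PI) by lra. nra. }
  apply Rmult_le_reg_r with (8 * L0 ^ 2). nra.
  replace (PI ^ 2 / (8 * L0 ^ 2) * (8 * L0 ^ 2)) with (PI ^ 2) by (field; nra). nra.
Qed.


Theorem lemma7 (r : R) (f L f1 f2 L1 L2 : R -> R) (S : R) :
  0 < r ->
  (* (f,L) satisfies the usual conditions, L : [0,oo) -> (0,oo) *)
  (forall t, 0 <= t -> 0 < L t) ->
  f 0 = 0 ->
  C2_on f f1 f2 -> C2_on L L1 L2 ->
  E_vanishes f1 f2 L L1 L2 ->
  S_val r f1 L L1 = Finite S ->
  0 < S ->
  let L0 := Rmax (PI / (2 * sqrt S)) 1 in
  let Lt := fun t => if Rle_dec (L t) L0 then L t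
                     else L0 + (L t - L0) * exp (- (L t - L0) ^ 2) in
  let ft := fun t => f t + L t - Lt t in
  (forall t, 0 <= t -> 0 < Lt t) /\
  exists ft1 ft2 Lt1 Lt2 : R -> R,
    C2_on ft ft1 ft2 /\ C2_on Lt Lt1 Lt2 /\
    E_vanishes ft1 ft2 Lt Lt1 Lt2 /\
    exists S' : R, S_val r ft1 Lt Lt1 = Finite S' /\ S / 2 <= S' /\ 0 < S'.
Proof.
  intros Hr HLp Hf0 [Hfd [Hf1d Hf2c]] [HLd [HL1d HL2c]] HE HS HSp L0 Lt ft.
  assert (HL0 : 1 <= L0) by apply Rmax_r.
  assert (HL0S : PI ^ 2 / (8 * L0 ^ 2) <= S / 2) by (apply L0S; exact HSp).
  eapply core_all; eassumption.
Qed.
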